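(* Let $\lambda,\mu,\nu$ be partitions of the same integer with $\ell(\lambda)\le 4$ and $\ell(\mu),\ell(\nu)\le 2$. If $\nu_2<\lambda_3+\lambda_4$ or $\mu_2+\nu_2<\lambda_2+\lambda_3+2\lambda_4$, then the Kronecker coefficient $g_{\mu,\nu,\lambda}$ is zero. Equivalently, if $g_{\mu,\nu,\lambda}\ne0$ then $\lambda_2+\lambda_3+2\lambda_4\le\mu_2+\nu_2$ and $\lambda_3+\lambda_4\le\nu_2$.
   Context: Partitions are padded with zero parts. The Kronecker coefficient $g_{\mu,\nu,\lambda}$ is defined by $s_\lambda(x_1y_1,x_1y_2,x_2y_1,x_2y_2)=\sum_{\mu,\nu}g_{\mu,\nu,\lambda}\,s_\mu(x_1,x_2)s_\nu(y_1,y_2)$, with $s$ the Schur polynomials. *)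

(* Defs.v *)
From HB Require Import structures.
From mathcomp Require Import all_boot all_order all_algebra.
Set Implicit Arguments. Unset Strict Implicit. Unset Printing Implicit Defensive.
Import GRing.Theory.
Local Open Scope ring_scope.

(* A partition is a seq nat (nonincreasing; zero parts allowed as padding).
   Cells of the Young diagram of la: pairs (i,j) with i < size la, j < la_i.
   (j is bounded by sumn la, which exceeds every part.) *)
Definition cells (la : seq nat) :=
  {c : 'I_(size la) * 'I_(sumn la) | (c.2 < nth 0%N la c.1)%N}.

Definition ssyt (k : nat) (la : seq nat) (T : {ffun cells la -> 'I_k}) : bool :=
  [forall c : cells la, forall d : cells la,
     ((((val c).1 == (val d).1) && ((val c).2 <= (val d).2)%N) ==> (T c <= T d)%N)
     && ((((val c).2 == (val d).2) && ((val c).1 < (val d).1)%N) ==> (T c < T d)%N)].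

Definition schur (R : comNzRingType) (k : nat) (la : seq nat) (z : 'I_k -> R) : R :=
  \sum_(T : {ffun cells la -> 'I_k} | ssyt T) \prod_(c : cells la) z (T c).

Arguments schur {R} k la z.

(* Polynomial ring Z[x1,x2,y1,y2] as nested univariate polynomials. *)
Definition P1 := {poly int}.
Definition P2 := {poly P1}.
Definition P3 := {poly P2}.
Definition P4 := {poly P3}.
Definition X1 : P4 := 'X.
Definition X2 : P4 := ('X : P3)%:P.
Definition Y1 : P4 := (('X : P2)%:P : P3)%:P.
Definition Y2 : P4 := ((('X : P1)%:P : P2)%:P : P3)%:P.

Definition xvars (i : 'I_2) : P4 := if val i == 0%N then X1 else X2.
Definition yvars (i : 'I_2) : P4 := if val i == 0%N then Y1 else Y2.
Definition xyvars (i : 'I_4) : P4 :=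
  match val i with 0%N => X1 * Y1 | 1%N => X1 * Y2 | 2%N => X2 * Y1 | _ => X2 * Y2 end.

(* The defining identity of the Kronecker coefficients g_{mu,nu,la} for a
   partition la of n (with at most 4 parts):
   s_la(x1y1,x1y2,x2y1,x2y2) = sum_{mu,nu} g_{mu,nu,la} s_mu(x1,x2) s_nu(y1,y2),
   the sum over partitions mu = (n-i, i), nu = (n-j, j) of n with <= 2 parts. *)
Definition kronecker_identity (g : seq nat -> seq nat -> seq nat -> int)
    (la : seq nat) : Prop :=
  let n := sumn la in
  schur 4 la xyvars =
  \sum_(0 <= i < n.+1 | (i <= n - i)%N) \sum_(0 <= j < n.+1 | (j <= n - j)%N)
     (g [:: (n - i)%N; i] [:: (n - j)%N; j] la)%:~R
       * (schur 2 [:: (n - i)%N; i] xvars * schur 2 [:: (n - j)%N; j] yvars).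

(* Main.v *)
Require Import Defs.
From HB Require Import structures.
From mathcomp Require Import all_boot all_order all_algebra zify.
Import GRing.Theory.
Set Implicit Arguments.

Section Tab.
Variables (la : seq nat) (k : nat).
Hypothesis Hdec : forall r, nth 0 la r.+1 <= nth 0 la r.

Lemma nth_mono r r' : r <= r' -> nth 0 la r' <= nth 0 la r.
Proof.
move=> /subnKC <-; elim: (r' - r) => [|m IH]; first by rewrite addn0.
by rewrite addnS (leq_trans (Hdec _)).
Qed.

Definition ext (F : cells la -> nat) (x : 'I_(size la) * 'I_(sumn la)) : nat :=
  oapp F 0 (insub x).

Lemma ext_in F (x : 'I_(size la) * 'I_(sumn la)) (H : x.2 < nth 0 la x.1) : ext F x = F (exist _ x H).
Proof. by rewrite /ext insubT. Qed.

Lemma ext_out F (x : 'I_(size la) * 'I_(sumn la)) : ~~ (x.2 < nth 0 la x.1) -> ext F x = 0.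
Proof. by move=> H; rewrite /ext insubF //; apply: negbTE. Qed.

Lemma sum_cells F : \sum_(c : cells la) F c = \sum_(r < size la) \sum_(j < sumn la) ext F (r,j).
Proof.
rewrite pair_big /=.
rewrite [RHS](bigID (fun p : 'I_(size la) * 'I_(sumn la) => p.2 < nth 0 la p.1)) /=.
rewrite [X in _ = _ + X]big1 ?addn0; last by move=> x Hx; rewrite -?surjective_pairing ext_out.
rewrite (reindex_omap (val : cells la -> _) insub) /=; last by move=> x Hx; rewrite insubT.
apply: eq_big => c; first by rewrite -?surjective_pairing (valP c) valK eqxx.
by rewrite -?surjective_pairing /ext valK.
Qed.

Variable T : {ffun cells la -> 'I_k}.
Hypothesis HT : ssyt T.

Lemma ssyt_row (c d : cells la) : (val c).1 = (val d).1 -> (val c).2 <= (val d).2 -> T c <= T d.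
Proof.
move=> e l; move/forallP: HT => /(_ c) /forallP /(_ d) /andP [/implyP H _].
by apply: H; rewrite e eqxx l.
Qed.

Lemma ssyt_col (c d : cells la) : (val c).2 = (val d).2 -> (val c).1 < (val d).1 -> T c < T d.
Proof.
move=> e l; move/forallP: HT => /(_ c) /forallP /(_ d) /andP [_ /implyP H].
by apply: H; rewrite e eqxx l.
Qed.

Lemma cell_above (c : cells la) r : r <= (val c).1 ->
  exists d : cells la, (val d).1 = r :> nat /\ (val d).2 = (val c).2.
Proof.
move=> Hr.
have Hs : r < size la by apply: leq_ltn_trans Hr (ltn_ord _).
have Hc : (val c).2 < nth 0 la (Ordinal Hs).
  by apply: (leq_trans (valP c)); apply: nth_mono.
by exists (exist _ (Ordinal Hs, (val c).2) Hc).
Qed.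

Lemma row_le_T (c : cells la) : (val c).1 <= T c.
Proof.
move e : (nat_of_ord (val c).1) => n; elim: n c e => [//|n IH] c e.
have Hn : n <= (val c).1 by rewrite e.
have [d [d1 d2]] := @cell_above c n Hn.
have := @ssyt_col d c d2; rewrite d1 e ltnSn => /(_ isT).
by apply: leq_trans; rewrite ltnS IH.
Qed.

Lemma T_eq_row : \sum_(c : cells la) (T c : nat) = \sum_(c : cells la) (nat_of_ord (val c).1) ->
  forall c, (T c : nat) = (val c).1.
Proof.
move=> E c; apply/eqP; rewrite eqn_leq row_le_T andbT -subn_eq0.
have /eqP := sumnB (index_enum (cells la)) (P := xpredT) (fun c _ => row_le_T c).
rewrite E subnn sum_nat_eq0 => /forallP /(_ c) /=.
by [].
Qed.
End Tab.

Lemma nth_le_sumn (s : seq nat) r : nth 0 s r <= sumn s.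
Proof. elim: s r => [|x s IH] [|r] //=; [exact: leq_addr | exact: leq_trans (IH r) (leq_addl _ _)]. Qed.

Lemma sum_lt N m : m <= N -> \sum_(j < N) (j < m : nat) = m.
Proof.
move=> H; rewrite (eq_bigr (fun j : 'I_N => if j < m then 1 else 0)); last by move=> j _; case: (j < m).
by rewrite -big_mkcond big_ord_narrow // big_const_ord iter_addn_0 mul1n.
Qed.

Lemma sum_row (la : seq nat) (f : nat -> nat) :
  \sum_(c : cells la) f (nat_of_ord (val c).1) = \sum_(r < size la) f r * nth 0 la r.
Proof.
rewrite sum_cells; apply: eq_bigr => r _.
rewrite -(@sum_lt _ _ (nth_le_sumn la r)) big_distrr /=; apply: eq_bigr => j _.
case: (ltnP j (nth 0 la r)) => H.
  by rewrite (@ext_in la _ (r, j) H) muln1.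
by rewrite ext_out ?muln0 // -leqNgt.
Qed.


Section TwoRow.
Variables a b : nat.
Hypothesis Hba : b <= a.
Let la := [:: a; b].

Lemma dec2 : forall r, nth 0 la r.+1 <= nth 0 la r.
Proof. by case=> [|[|r]] //=; rewrite nth_nil. Qed.

Definition cnt (T : {ffun cells la -> 'I_2}) := \sum_(c : cells la) (T c : nat).

Lemma sum_row2 : \sum_(c : cells la) (nat_of_ord (val c).1) = b.
Proof. by rewrite (sum_row la id) /= !big_ord_recl big_ord0 /= mul1n addn0. Qed.

Lemma cnt_ge T : ssyt T -> b <= cnt T.
Proof.
move=> HT; rewrite -{1}sum_row2; apply: leq_sum => c _; exact: (@row_le_T la 2 dec2 T HT c).
Qed.

Definition T0 : {ffun cells la -> 'I_2} := [ffun c => (val c).1].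

Lemma T0_ssyt : ssyt T0.
Proof.
apply/forallP => c; apply/forallP => d; rewrite !ffunE; apply/andP; split; apply/implyP.
  by case/andP => /eqP -> _.
by case/andP.
Qed.

Lemma cnt_T0 : cnt T0 = b.
Proof. by rewrite /cnt -sum_row2; apply: eq_bigr => c _; rewrite ffunE. Qed.

Lemma cnt_eq T : ssyt T -> cnt T = b -> T = T0.
Proof.
move=> HT E; apply/ffunP => c; apply: val_inj; rewrite ffunE /=.
by apply: (@T_eq_row la 2 dec2 T HT); rewrite sum_row2 -E.
Qed.

Lemma count1 : \sum_(T : {ffun cells la -> 'I_2} | ssyt T) (cnt T == b : nat) = 1.
Proof.
rewrite (bigD1 T0) ?T0_ssyt //= cnt_T0 eqxx big1 // => T /andP [HT ne].
by case: eqP => // /(cnt_eq HT) E; rewrite E eqxx in ne.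
Qed.
End TwoRow.

Lemma leq_bool (b1 b2 : bool) : (b1 -> b2) -> b1 <= b2.
Proof. by case: b1 b2 => [] [] // ->. Qed.

Section FourRow.
Variables l1 l2 l3 l4 : nat.
Hypotheses (H43 : l4 <= l3) (H32 : l3 <= l2) (H21 : l2 <= l1).
Let la := [:: l1; l2; l3; l4].

Lemma dec4 : forall r, nth 0 la r.+1 <= nth 0 la r.
Proof. by case=> [|[|[|[|r]]]] //=; rewrite nth_nil. Qed.

Definition rk (t : nat) : nat := (1 <= t) + (3 <= t).

Lemma rk_bound (T : {ffun cells la -> 'I_4}) : ssyt T ->
  l2 + l3 + 2 * l4 <= \sum_(c : cells la) rk (T c).
Proof.
move=> HT.
have -> : l2 + l3 + 2 * l4 = \sum_(c : cells la) rk (nat_of_ord (val c).1).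
  by rewrite (sum_row la rk) /= !big_ord_recl big_ord0 /= /rk /=; lia.
apply: leq_sum => c _; have := @row_le_T la 4 dec4 T HT c.
rewrite /rk; move: (nat_of_ord _) (nat_of_ord _) => x y Hxy.
apply: leq_add; apply: leq_bool => h; exact: leq_trans h Hxy.
Qed.

Lemma odd_aux (t1 t2 : nat) : 1 <= t1 -> t1 < t2 -> t2 < 4 -> 1 <= odd t1 + odd t2.
Proof. by case: t1 => [|[|[|[|t1]]]] //; case: t2 => [|[|[|[|t2]]]]. Qed.

Lemma odd_bound (T : {ffun cells la -> 'I_4}) : ssyt T ->
  l3 + l4 <= \sum_(c : cells la) odd (T c).
Proof.
move=> HT; rewrite sum_cells exchange_big.
have Hl3 : l3 <= sumn la by rewrite /= ; lia.
have Hl4 : l4 <= sumn la by rewrite /= ; lia.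
apply: (@leq_trans (\sum_(j < sumn la) ((j < l3) + (j < l4)))).
  by rewrite big_split (@sum_lt _ _ Hl3) (@sum_lt _ _ Hl4).
apply: leq_sum => j _.
rewrite !big_ord_recl big_ord0.
set F := fun c : cells la => odd (T c).
have cellE : forall (r : 'I_(size la)) (H : j < nth 0 la r),
    ext F (r, j) = odd (T (exist _ (r, j) H)) by move=> r H; rewrite ext_in.
case: (ltnP j l3) => h3; last first.
  by rewrite (leq_gtF (leq_trans H43 h3)).
have H1 : j < nth 0 la (lift ord0 ord0 : 'I_(size la)) := leq_trans h3 H32.
have H2 : j < nth 0 la (lift ord0 (lift ord0 ord0) : 'I_(size la)) by [].
rewrite (cellE _ H1) (cellE _ H2).
set c1 := (exist _ (lift ord0 ord0, j) H1 : cells la).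
set c2 := (exist _ (lift ord0 (lift ord0 ord0), j) H2 : cells la).
have r1 := @row_le_T la 4 dec4 T HT c1.
have r12 : T c1 < T c2 by apply: (@ssyt_col la 4 T HT c1 c2).
have := @odd_aux _ _ r1 r12 (ltn_ord _).
case: (ltnP j l4) => h4; first last.
  by move=> h; rewrite /=; lia.
have H3 : j < nth 0 la (lift ord0 (lift ord0 (lift ord0 ord0)) : 'I_(size la)) by [].
rewrite (cellE _ H3); set c3 := (exist _ (lift ord0 (lift ord0 (lift ord0 ord0)), j) H3 : cells la).
have r3 := @row_le_T la 4 dec4 T HT c3.
have : (T c3 : nat) = 3.
  by have := ltn_ord (T c3); move: r3 => /=; rewrite /bump /=; lia.
move=> -> h /=; lia.
Qed.
End FourRow.
Local Open Scope ring_scope.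

Lemma cf0 (R : comNzRingType) (S : nzRingType) (f : {rmorphism S -> R}) u : commr_rmorph f u.
Proof. by move=> x; rewrite /GRing.comm mulrC. Qed.

Section Phi.
Variables p q : nat.
Definition psi1 : {rmorphism P1 -> P1} := horner_morph (cf0 (polyC : {rmorphism int -> P1}) ('X^q)).
Definition psi2 : {rmorphism P2 -> P1} := horner_morph (cf0 psi1 1).
Definition psi3 : {rmorphism P3 -> P1} := horner_morph (cf0 psi2 ('X^p)).
Definition phi : {rmorphism P4 -> P1} := horner_morph (cf0 psi3 1).
Lemma phiX1 : phi X1 = 1. Proof. rewrite /phi /X1 /=. exact: horner_morphX. Qed.
Lemma phiX2 : phi X2 = 'X^p. Proof. rewrite /phi /X2 /= horner_morphC /psi3 /=. exact: horner_morphX. Qed.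
Lemma phiY1 : phi Y1 = 1. Proof. rewrite /phi /Y1 /= horner_morphC /psi3 /= horner_morphC /psi2 /=. exact: horner_morphX. Qed.
Lemma phiY2 : phi Y2 = 'X^q. Proof. rewrite /phi /Y2 /= horner_morphC /psi3 /= horner_morphC /psi2 /= horner_morphC /psi1 /=. exact: horner_morphX. Qed.

Lemma phi_schur k la (z : 'I_k -> P4) : phi (schur k la z) = schur k la (fun i => phi (z i)).
Proof. by rewrite /schur rmorph_sum; apply: eq_bigr => T _; rewrite rmorph_prod. Qed.

Lemma phi_x (i : 'I_2) : phi (xvars i) = 'X^(p * i).
Proof. by case: i => [[|[|m]] Hm] //; rewrite /xvars /= ?phiX1 ?phiX2 ?muln0 ?muln1. Qed.
Lemma phi_y (i : 'I_2) : phi (yvars i) = 'X^(q * i).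
Proof. by case: i => [[|[|m]] Hm] //; rewrite /yvars /= ?phiY1 ?phiY2 ?muln0 ?muln1. Qed.
Definition wt (t : nat) : nat := p * (1 < t) + q * odd t.
Lemma phi_xy (i : 'I_4) : phi (xyvars i) = 'X^(wt i).
Proof.
case: i => [[|[|[|[|m]]]] Hm] //; rewrite /xyvars /wt /= rmorphM ?phiX1 ?phiX2 ?phiY1 ?phiY2 ?mul1r ?mulr1 ?muln0 ?muln1 ?addn0 ?add0n ?exprD //.
Qed.
End Phi.

Lemma schur_X k la (w : 'I_k -> nat) :
  schur k la (fun i => 'X^(w i) : P1) = \sum_(T | ssyt T) 'X^(\sum_(c : cells la) w (T c)).
Proof. by apply: eq_bigr => T _; rewrite prodrXr. Qed.

Lemma coef_sumX (I : finType) (P : pred I) (E : I -> nat) e :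
  (\sum_(i | P i) 'X^(E i) : P1)`_e = (\sum_(i | P i) (E i == e : nat))%:R.
Proof. by rewrite coef_sum natr_sum; apply: eq_bigr => i _; rewrite coefXn eq_sym. Qed.

Lemma coef_prod2 (I J : finType) (P : pred I) (Q : pred J) (E1 : I -> nat) (E2 : J -> nat) e :
  ((\sum_(i | P i) 'X^(E1 i)) * (\sum_(j | Q j) 'X^(E2 j)) : P1)`_e =
  (\sum_(i | P i) \sum_(j | Q j) (E1 i + E2 j == e : nat))%:R.
Proof.
rewrite mulr_suml coef_sum natr_sum; apply: eq_bigr => i _.
rewrite mulr_sumr coef_sum natr_sum; apply: eq_bigr => j _.
by rewrite -exprD coefXn eq_sym.
Qed.
Lemma mono_eq (p q i j c1 c2 : nat) : (0 < p)%N -> (0 < q)%N -> (i <= c1)%N -> (j <= c2)%N ->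
  (p * c1 + q * c2 == p * i + q * j)%N = (c1==i)&&(c2==j).
Proof.
move=> Hp Hq H1 H2; apply/idP/idP => [/eqP E|/andP[/eqP-> /eqP->]//].
apply/andP; split; apply/eqP; nia.
Qed.

Lemma phi_schur_xy p q la : phi p q (schur 4 la xyvars) =
  \sum_(T : {ffun cells la -> 'I_4} | ssyt T) 'X^(\sum_(c : cells la) wt p q (T c)).
Proof.
rewrite phi_schur /schur; apply: eq_bigr => T _.
under eq_bigr do rewrite phi_xy. by rewrite prodrXr.
Qed.

Lemma phi_schur_x p q a b : phi p q (schur 2 [:: a; b] xvars) =
  \sum_(T : {ffun cells [:: a; b] -> 'I_2} | ssyt T) 'X^(p * cnt T).
Proof.
rewrite phi_schur /schur; apply: eq_bigr => T _.
under eq_bigr do rewrite phi_x. by rewrite prodrXr /cnt big_distrr.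
Qed.

Lemma phi_schur_y p q a b : phi p q (schur 2 [:: a; b] yvars) =
  \sum_(T : {ffun cells [:: a; b] -> 'I_2} | ssyt T) 'X^(q * cnt T).
Proof.
rewrite phi_schur /schur; apply: eq_bigr => T _.
under eq_bigr do rewrite phi_y. by rewrite prodrXr /cnt big_distrr.
Qed.

Lemma sum_if1 (r : seq nat) (P : pred nat) x (c : int) : uniq r -> x \in r -> P x ->
  \sum_(i <- r | P i) (if i == x then c else 0) = c.
Proof.
move=> u xr Px; rewrite big_mkcond (bigD1_seq x) //= Px eqxx big1 ?addr0 // => i /negbTE ->.
by case: (P i).
Qed.

Section Core.
Variables (g : seq nat -> seq nat -> seq nat -> int) (la : seq nat) (p q B : nat).
Let n := sumn la.
Hypothesis Hid : kronecker_identity g la.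
Hypotheses (Hp : (0 < p)%N) (Hq : (0 < q)%N).
Hypothesis HR1 : forall T : {ffun cells la -> 'I_4}, ssyt T ->
  (n.+1 * B <= \sum_(c : cells la) wt p q (T c))%N.
Hypothesis HR3 : forall i j a b : nat, (i <= n)%N -> (j <= n)%N -> (a <= n)%N -> (b <= n)%N ->
  (p * i + q * j = p * a + q * b)%N -> i = a /\ j = b.
Variables m2 n2 : nat.
Hypotheses (Hm : (m2 <= n - m2)%N) (Hn : (n2 <= n - n2)%N) (HR2 : (p * m2 + q * n2 < n.+1 * B)%N).

Definition D e i j : nat :=
  \sum_(T1 : {ffun cells [:: (n - i)%N; i] -> 'I_2} | ssyt T1)
  \sum_(T2 : {ffun cells [:: (n - j)%N; j] -> 'I_2} | ssyt T2) (p * cnt T1 + q * cnt T2 == e)%N.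

Lemma D0 e i j : (i <= n - i)%N -> (j <= n - j)%N ->
  (forall c1 c2, (i <= c1)%N -> (j <= c2)%N -> (p * c1 + q * c2)%N = e -> False) -> D e i j = 0%N.
Proof.
move=> Hi Hj H; rewrite /D big1 // => T1 HT1; rewrite big1 // => T2 HT2.
case: eqP => // E; exfalso; apply: (H _ _ _ _ E); exact: cnt_ge.
Qed.

Lemma D1 i j : (i <= n - i)%N -> (j <= n - j)%N -> D (p * i + q * j)%N i j = 1%N.
Proof.
move=> Hi Hj; rewrite /D.
transitivity (\sum_(T1 : {ffun cells [:: (n - i)%N; i] -> 'I_2} | ssyt T1)
  ((cnt T1 == i) * \sum_(T2 : {ffun cells [:: (n - j)%N; j] -> 'I_2} | ssyt T2) (cnt T2 == j)))%N.
  apply: eq_bigr => T1 HT1; rewrite [RHS]big_distrr; apply: eq_bigr => T2 HT2 /=.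
  by rewrite mono_eq ?cnt_ge //; case: (cnt T1 == i); case: (cnt T2 == j).
by rewrite count1 // -big_distrl /= count1 // muln1.
Qed.

Lemma core : g [:: (n - m2)%N; m2] [:: (n - n2)%N; n2] la = 0.
Proof.
apply/eqP; apply: contraT => Hg.
pose C := fun x : 'I_n.+1 * 'I_n.+1 => [&& (x.1 <= n - x.1)%N, (x.2 <= n - x.2)%N &
   g [:: (n - x.1)%N; nat_of_ord x.1] [:: (n - x.2)%N; nat_of_ord x.2] la != 0].
have Hm' : (m2 < n.+1)%N by lia.
have Hn' : (n2 < n.+1)%N by lia.
have C0 : C (inord m2, inord n2) by rewrite /C /= !inordK // Hm Hn Hg.
case: (arg_minnP (fun x : 'I_n.+1 * 'I_n.+1 => (p * x.1 + q * x.2)%N) C0) => a Ca Amin.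
move: Ca; rewrite /C => /and3P [Ca1 Ca2 Cag].
set e := (p * a.1 + q * a.2)%N.
have He : (e <= p * m2 + q * n2)%N by have := Amin _ C0; rewrite /= !inordK.
have E := congr1 (fun P => (phi p q P)`_e) Hid.
cbv beta zeta in E; move: E.
rewrite phi_schur_xy coef_sumX big1; last first.
  by move=> T HT; case: eqP => // E; have := @HR1 T HT; rewrite E; lia.
rewrite rmorph_sum coef_sum big_seq_cond.
set ga := g [:: (n - a.1)%N; nat_of_ord a.1] [:: (n - a.2)%N; nat_of_ord a.2] la.
have Ha1 : (a.1 <= n)%N by rewrite -ltnS.
have Ha2 : (a.2 <= n)%N by rewrite -ltnS.
rewrite (eq_bigr (fun i : nat => if i == a.1 :> nat then ga else 0)); last first.
  move=> i /andP [Hir Hi]; rewrite mem_index_iota /= ltnS in Hir.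
  rewrite rmorph_sum coef_sum big_seq_cond.
  rewrite (eq_bigr (fun j : nat => if (i == a.1 :> nat) && (j == a.2 :> nat) then ga else 0)); last first.
    move=> j /andP [Hjr Hj]; rewrite mem_index_iota /= ltnS in Hjr.
    rewrite rmorphM rmorph_int rmorphM phi_schur_x phi_schur_y mulrzl coefMrz coef_prod2.
    rewrite -[X in X%:R *~ _]/(D e i j).
    case: ifP => [/andP [/eqP Ei /eqP Ej] | Hne].
      subst i j; rewrite /e (@D1 _ _ Ca1 Ca2) -mulrzl intz; exact: mulr1.
    have [/eqP Hg0 | Hg0] := boolP (g [:: (sumn la - i)%N; i] [:: (sumn la - j)%N; j] la == 0).
      by rewrite Hg0 mulr0z.
    rewrite (@D0 e i j Hi Hj) ?mul0rz // => c1 c2 h1 h2 Ec.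
    have Cij : C (inord i, inord j) by rewrite /C /= !inordK ?ltnS // Hi Hj Hg0.
    have := Amin _ Cij; rewrite /= !inordK ?ltnS // -/e => Hle.
    have Hk : (p * i + q * j <= p * c1 + q * c2)%N by apply: leq_add; apply: leq_mul.
    have Eij : (p * i + q * j = e)%N by lia.
    have [E1 E2] := @HR3 i j a.1 a.2 Hir Hjr Ha1 Ha2 Eij.
    by rewrite E1 E2 !eqxx in Hne.
  case: (i == a.1) => /=; last by rewrite big1.
  apply: sum_if1; first (by rewrite /index_iota iota_uniq);
    rewrite mem_index_iota leq0n ltn_ord //.
rewrite sum_if1; last first.
- by rewrite mem_index_iota leq0n ltn_ord.
- by rewrite mem_index_iota leq0n ltn_ord.
- by rewrite /index_iota iota_uniq.
by move/esym/eqP; rewrite (negbTE Cag).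
Qed.
End Core.
Unset Implicit Arguments.

Lemma inj_div (N i j a b : nat) : (i < N)%N -> (a < N)%N -> (i + N * j = a + N * b)%N -> i = a /\ j = b.
Proof.
move=> Hi Ha E.
have HN : (0 < N)%N by apply: leq_ltn_trans Hi.
have E1 := congr1 (modn^~ N) E; have E2 := congr1 (divn^~ N) E; move: E1 E2 => /=.
rewrite ![(_ + N * _)%N]addnC ![(N * _)%N]mulnC !modnMDl !divnMDl // !modn_small // !divn_small //.
by move=> -> /eqP; rewrite !addn0 => /eqP.
Qed.

Theorem proposition3p6 (l1 l2 l3 l4 m1 m2 n1 n2 : nat)
    (g : seq nat -> seq nat -> seq nat -> int) :
  (l4 <= l3 <= l2)%N -> (l2 <= l1)%N -> (m2 <= m1)%N -> (n2 <= n1)%N ->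
  (l1 + l2 + l3 + l4 = m1 + m2)%N -> (m1 + m2 = n1 + n2)%N ->
  kronecker_identity g [:: l1; l2; l3; l4] ->
  ((n2 < l3 + l4)%N \/ (m2 + n2 < l2 + l3 + 2 * l4)%N) ->
  g [:: m1; m2] [:: n1; n2] [:: l1; l2; l3; l4] = 0.
Proof.
move=> /andP [H43 H32] H21 Hm Hn S1 S2 Hid Hc.
set la := [:: l1; l2; l3; l4].
have Hs : sumn la = (l1 + l2 + l3 + l4)%N by rewrite /= addn0 !addnA.
have -> : m1 = (sumn la - m2)%N by rewrite Hs; lia.
have -> : n1 = (sumn la - n2)%N by rewrite Hs; lia.
have Hm' : (m2 <= sumn la - m2)%N by rewrite Hs; lia.
have Hn' : (n2 <= sumn la - n2)%N by rewrite Hs; lia.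
set N := (sumn la).+1.
case: Hc => Hc.
- apply: (@core g la 1 N (l3 + l4)) => //.
  + move=> T HT; apply: (@leq_trans (N * \sum_(c : cells la) odd (T c))).
      by rewrite leq_mul2l odd_bound ?orbT.
    rewrite big_distrr /=; apply: leq_sum => c _; rewrite /wt; exact: leq_addl.
  + move=> i j a b Hi Hj Ha Hb; rewrite !mul1n => E.
    by apply: inj_div E; rewrite ltnS.
  + rewrite mul1n; have : (N * n2.+1 <= N * (l3 + l4))%N by rewrite leq_mul2l Hc orbT.
    have : (m2 < N)%N by rewrite ltnS; lia.
    rewrite mulnS; lia.
- apply: (@core g la N N.+1 (l2 + l3 + 2 * l4)) => //.
  + move=> T HT; apply: (@leq_trans (N * \sum_(c : cells la) rk (T c))).
      by rewrite leq_mul2l rk_bound ?orbT.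
    rewrite big_distrr /=; apply: leq_sum => c _; rewrite /wt /rk.
    case: (T c) => [[|[|[|[|t]]]] Ht] //=; lia.
  + move=> i j a b Hi Hj Ha Hb E.
    have E' : (j + N * (i + j) = b + N * (a + b))%N by move: E; rewrite !mulnDr !mulSn; lia.
    have Hj' : (j < N)%N by rewrite ltnS.
    have Hb' : (b < N)%N by rewrite ltnS.
    have [Ej Eij] := inj_div _ _ _ _ _ Hj' Hb' E'.
    by split; lia.
  + have : (N * (m2 + n2).+1 <= N * (l2 + l3 + 2 * l4))%N by rewrite leq_mul2l Hc orbT.
    have : (n2 < N)%N by rewrite ltnS; lia.
    rewrite mulnS mulSn mulnDr; lia.
Qed.
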